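(* Fix $\underline\mu=\{\mu_{lk}\in\mathbb C^\tau\}$ and let $A_{lk}=\sum_{(i,j)}\alpha_{ij}\beta_{ilk}\mu_{ij}\mu_{ij}^H$. For each user $(l,k)$ and $s\in[1:\tau]$ let $c^{(s)}_{lk}=\alpha_{lk}\beta_{llk}\Re\{\mu_{lk}^H\varphi_s\}$, $b^{(s)}_{lk}=\varphi_s^HA_{lk}\varphi_s$, let $p^{(s)}_{lk}$ be a maximizer of $p\mapsto 2\sqrt p\,c^{(s)}_{lk}-p\,b^{(s)}_{lk}$ over $p\in[0,P_{\max}]$, and let $\pi^{(s)}_{lk}=2\sqrt{p^{(s)}_{lk}}\,c^{(s)}_{lk}-p^{(s)}_{lk}b^{(s)}_{lk}$. Then $$f(\underline p,\underline\psi,\underline\mu)=\sum_{(l,k)}\big(2\sqrt{p_{lk}}\,\alpha_{lk}\beta_{llk}\Re\{\mu_{lk}^H\psi_{lk}\}-p_{lk}\psi_{lk}^HA_{lk}\psi_{lk}\big)-\sigma^2\sum_{(l,k)}\alpha_{lk}\|\mu_{lk}\|^2,$$ and the maximum of $f(\cdot,\cdot,\underline\mu)$ over the feasible set $\mathcal F$ equals $\Pi^\star-\sigma^2\sum_{(l,k)}\alpha_{lk}\|\mu_{lk}\|^2$, where $\Pi^\star$ is the optimal value of the assignment problem: maximize $\sum_{(l,k,s)}\pi^{(s)}_{lk}x^{(s)}_{lk}$ over $x^{(s)}_{lk}\in\{0,1\}$ subject to $\sum_{s=1}^\tau x^{(s)}_{lk}=1$ for each $(l,k)$ and $\sum_{k=1}^K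 x^{(s)}_{lk}\le1$ for each $(l,s)$. Moreover, for any optimal $x$, setting $p_{lk}=\sum_sx^{(s)}_{lk}p^{(s)}_{lk}$ and $\psi_{lk}=\sum_sx^{(s)}_{lk}\varphi_s$ gives a maximizer of $f(\cdot,\cdot,\underline\mu)$ over $\mathcal F$.
   Context: $L$ cells indexed by $l,i$, each with $K$ users indexed by $k,j$, with $K\le\tau$; sums over $(i,j)$ or $(l,k)$ range over all $LK$ users. Noise variance $\sigma^2>0$, power budget $P_{\max}>0$, large-scale fading $\beta_{lij}>0$, weights $\alpha_{lk}>0$. $\{\varphi_1,\dots,\varphi_\tau\}\subset\mathbb C^\tau$ satisfy $\varphi_s^H\varphi_t=\tau$ if $s=t$ and $0$ otherwise. Orthogonal pilot design variables: powers $p_{lk}$ and normalized pilots $\psi_{lk}$; the feasible set $\mathcal F$ consists of all $(\underline p,\underline\psi)$ with $0\le p_{lk}\le P_{\max}$, $\psi_{lk}\in\{\varphi_1,\dots,\varphi_\tau\}$, and $\psi_{lk}\neq\psi_{lk'}$ for $k\neq k'$ (same cell). $D_l=\sigma^2I_\tau+\sum_{(i,j)}\beta_{lij}p_{ij}\psi_{ij}\psi_{ij}^H$, and $f(\underline p,\underline\psi,\underline\mu)=\sum_{(l,k)}\alpha_{lk}\big(2\beta_{llk}\sqrt{p_{lk}}\Re\{\mu_{lk}^H\psi_{lk}\}-\mu_{lk}^HD_l\mu_{lk}\big)$. *)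

(* Defs.v *)
(* The complex field is modelled by an arbitrary
   numClosedFieldType C (e.g. algC); real quantities are elements of C that
   are real (forced by the order hypotheses). *)
From HB Require Import structures.
From mathcomp Require Import all_boot all_order all_algebra.
Set Implicit Arguments. Unset Strict Implicit. Unset Printing Implicit Defensive.
Import Order.TTheory GRing.Theory Num.Theory Num.Def.
Local Open Scope ring_scope.

Section PilotDefs.
Variables (C : numClosedFieldType) (L K tau : nat).

Definition dotH (u v : 'cV[C]_tau) : C := \sum_(i < tau) (u i 0)^* * v i 0.

Definition adjv (u : 'cV[C]_tau) : 'rV[C]_tau := (map_mx Num.conj u)^T.

Definition Dmat (sigma2 : C) (beta : 'I_L -> 'I_L -> 'I_K -> C)
  (p : 'I_L -> 'I_K -> C) (psi : 'I_L -> 'I_K -> 'cV[C]_tau) (l : 'I_L)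
  : 'M[C]_tau :=
  sigma2%:M + \sum_(i < L) \sum_(j < K)
                 (beta l i j * p i j) *: (psi i j *m adjv (psi i j)).

Definition fobj (sigma2 : C) (alpha : 'I_L -> 'I_K -> C)
  (beta : 'I_L -> 'I_L -> 'I_K -> C)
  (p : 'I_L -> 'I_K -> C) (psi mu : 'I_L -> 'I_K -> 'cV[C]_tau) : C :=
  \sum_(l < L) \sum_(k < K)
    alpha l k * (2 * beta l l k * sqrtC (p l k) * 'Re (dotH (mu l k) (psi l k))
                 - dotH (mu l k) (Dmat sigma2 beta p psi l *m mu l k)).

Definition feasible (Pmax : C) (phi : 'I_tau -> 'cV[C]_tau)
  (p : 'I_L -> 'I_K -> C) (psi : 'I_L -> 'I_K -> 'cV[C]_tau) : Prop :=
  (forall l k, 0 <= p l k <= Pmax) /\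
  (forall l k, exists s, psi l k = phi s) /\
  (forall l k k', k != k' -> psi l k <> psi l k').

Definition Amat (alpha : 'I_L -> 'I_K -> C) (beta : 'I_L -> 'I_L -> 'I_K -> C)
  (mu : 'I_L -> 'I_K -> 'cV[C]_tau) (l : 'I_L) (k : 'I_K) : 'M[C]_tau :=
  \sum_(i < L) \sum_(j < K) (alpha i j * beta i l k) *: (mu i j *m adjv (mu i j)).

Definition cco (alpha : 'I_L -> 'I_K -> C) (beta : 'I_L -> 'I_L -> 'I_K -> C)
  (mu : 'I_L -> 'I_K -> 'cV[C]_tau) (phi : 'I_tau -> 'cV[C]_tau)
  (s : 'I_tau) (l : 'I_L) (k : 'I_K) : C :=
  alpha l k * beta l l k * 'Re (dotH (mu l k) (phi s)).

Definition bco (alpha : 'I_L -> 'I_K -> C) (beta : 'I_L -> 'I_L -> 'I_K -> C)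
  (mu : 'I_L -> 'I_K -> 'cV[C]_tau) (phi : 'I_tau -> 'cV[C]_tau)
  (s : 'I_tau) (l : 'I_L) (k : 'I_K) : C :=
  dotH (phi s) (Amat alpha beta mu l k *m phi s).

Definition gfun (c b q : C) : C := 2 * sqrtC q * c - q * b.

Definition assign_feasible (x : 'I_tau -> 'I_L -> 'I_K -> bool) : Prop :=
  (forall l k, (\sum_(s < tau) x s l k = 1)%N) /\
  (forall l s, (\sum_(k < K) x s l k <= 1)%N).

Definition assign_obj (piv : 'I_tau -> 'I_L -> 'I_K -> C)
  (x : 'I_tau -> 'I_L -> 'I_K -> bool) : C :=
  \sum_(l < L) \sum_(k < K) \sum_(s < tau) piv s l k * (x s l k)%:R.

End PilotDefs.

(* Main.v *)
From Pilot Require Import Defs.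
From HB Require Import structures.
From mathcomp Require Import all_boot all_order all_algebra.
From mathcomp Require Import ring.
From Stdlib Require Import Classical_Prop FunctionalExtensionality.
Import Order.TTheory GRing.Theory Num.Theory Num.Def.
Local Open Scope ring_scope.

Section H.
Variable (C : numClosedFieldType) (tau : nat).
Implicit Types (u v w : 'cV[C]_tau).

Lemma dotHD u v w : dotH u (v + w) = dotH u v + dotH u w.
Proof. by rewrite /dotH -big_split; apply eq_bigr => i _; rewrite mxE mulrDr. Qed.

Lemma dotH0 u : dotH u 0 = 0.
Proof. by rewrite /dotH big1 // => i _; rewrite mxE mulr0. Qed.

Lemma dotHZ u a v : dotH u (a *: v) = a * dotH u v.
Proof. by rewrite /dotH mulr_sumr; apply eq_bigr => i _; rewrite mxE mulrCA. Qed.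

Lemma dotH_sum u (I : finType) (F : I -> 'cV[C]_tau) :
  dotH u (\sum_i F i) = \sum_i dotH u (F i).
Proof. exact: (big_morph (dotH u) (dotHD u) (dotH0 u)). Qed.

Lemma dotH_outer u v w : dotH u ((v *m adjv v) *m w) = dotH u v * dotH v w.
Proof.
rewrite -mulmxA.
have -> : adjv v *m w = (dotH v w)%:M.
  apply/matrixP => i j; rewrite !ord1 !mxE /dotH /=.
  by apply eq_bigr => k _; rewrite !mxE.
by rewrite mul_mx_scalar dotHZ mulrC.
Qed.
End H.

Section Q.
Variable (C : numClosedFieldType) (L K tau : nat).

Lemma quadD (sigma2 : C) beta (p : 'I_L -> 'I_K -> C) psi l (u : 'cV[C]_tau) :
  dotH u (Dmat sigma2 beta p psi l *m u) =
  sigma2 * dotH u u + \sum_(i < L) \sum_(j < K)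
     beta l i j * p i j * (dotH u (psi i j) * dotH (psi i j) u).
Proof.
rewrite /Dmat mulmxDl dotHD mul_scalar_mx dotHZ mulmx_suml dotH_sum.
congr (_ + _); apply eq_bigr => i _.
rewrite mulmx_suml dotH_sum; apply eq_bigr => j _.
by rewrite -scalemxAl dotHZ dotH_outer.
Qed.

Lemma quadA (alpha : 'I_L -> 'I_K -> C) beta mu l k (u : 'cV[C]_tau) :
  dotH u (Amat alpha beta mu l k *m u) =
  \sum_(i < L) \sum_(j < K)
     alpha i j * beta i l k * (dotH u (mu i j) * dotH (mu i j) u).
Proof.
rewrite /Amat mulmx_suml dotH_sum; apply eq_bigr => i _.
rewrite mulmx_suml dotH_sum; apply eq_bigr => j _.
by rewrite -scalemxAl dotHZ dotH_outer.
Qed.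

Lemma swap4 (F : 'I_L -> 'I_K -> 'I_L -> 'I_K -> C) :
  \sum_(l < L) \sum_(k < K) \sum_(i < L) \sum_(j < K) F l k i j =
  \sum_(i < L) \sum_(j < K) \sum_(l < L) \sum_(k < K) F l k i j.
Proof.
under eq_bigr do rewrite exchange_big.
rewrite exchange_big; apply eq_bigr => i _.
under eq_bigr do rewrite exchange_big.
by rewrite exchange_big.
Qed.

Lemma fobjE sigma2 (alpha : 'I_L -> 'I_K -> C) beta p psi (mu : 'I_L -> 'I_K -> 'cV[C]_tau) :
      fobj sigma2 alpha beta p psi mu =
      \sum_(l < L) \sum_(k < K)
         (2 * sqrtC (p l k) * alpha l k * beta l l k * 'Re (dotH (mu l k) (psi l k))
          - p l k * dotH (psi l k) (Amat alpha beta mu l k *m psi l k))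
      - sigma2 * \sum_(l < L) \sum_(k < K) alpha l k * dotH (mu l k) (mu l k).
Proof.
pose T l k := 2 * sqrtC (p l k) * alpha l k * beta l l k * 'Re (dotH (mu l k) (psi l k)).
pose Q l k i j := alpha l k * (beta l i j * p i j * (dotH (mu l k) (psi i j) * dotH (psi i j) (mu l k))).
transitivity (\sum_(l < L) \sum_(k < K) T l k
   - \sum_(l < L) \sum_(k < K) (sigma2 * (alpha l k * dotH (mu l k) (mu l k)))
   - \sum_(l < L) \sum_(k < K) \sum_(i < L) \sum_(j < K) Q l k i j).
  rewrite -!sumrB /fobj; apply eq_bigr => l _; rewrite -!sumrB; apply eq_bigr => k _.
  rewrite quadD.
  have -> : \sum_(i < L) \sum_(j < K) Q l k i j = alpha l k * \sum_(i < L) \sum_(j < K)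
          (beta l i j * p i j * (dotH (mu l k) (psi i j) * dotH (psi i j) (mu l k))).
    by rewrite mulr_sumr; apply eq_bigr => i _; rewrite mulr_sumr.
  rewrite /T. ring.
have E1 : \sum_(l < L) \sum_(k < K) (sigma2 * (alpha l k * dotH (mu l k) (mu l k)))
  = sigma2 * \sum_(l < L) \sum_(k < K) alpha l k * dotH (mu l k) (mu l k).
  by rewrite mulr_sumr; apply eq_bigr => l _; rewrite mulr_sumr.
have E2 : \sum_(l < L) \sum_(k < K)
       (2 * sqrtC (p l k) * alpha l k * beta l l k * 'Re (dotH (mu l k) (psi l k))
        - p l k * dotH (psi l k) (Amat alpha beta mu l k *m psi l k))
  = \sum_(l < L) \sum_(k < K) T l k - \sum_(i < L) \sum_(j < K) \sum_(l < L) \sum_(k < K) Q l k i j.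
  rewrite -sumrB; apply eq_bigr => i _; rewrite -sumrB; apply eq_bigr => j _.
  rewrite quadA mulr_sumr; congr (_ - _); apply eq_bigr => l _.
  rewrite mulr_sumr; apply eq_bigr => k _; rewrite /Q. ring.
rewrite E1 E2 swap4. ring.
Qed.
End Q.

Lemma sum_bool_le1 (I : finType) (f : I -> bool) :
  (forall i j, f i -> f j -> i = j) -> (\sum_i f i <= 1)%N.
Proof.
move=> H; case: (pickP f) => [i0 fi0 | none].
  rewrite (bigD1 i0) //= big1 ?fi0 //; move=> i ne.
  case fi: (f i) => //.
  by move: ne; rewrite (H _ _ fi fi0) eqxx.
by rewrite big1 //; move=> i _; rewrite none.
Qed.

Lemma sum_bool_le1_inj (I : finType) (f : I -> bool) i j :
  (\sum_i f i <= 1)%N -> f i -> f j -> i = j.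
Proof.
move=> H fi fj; apply/eqP; apply: contraT => ne.
move: H; rewrite (bigD1 i) //= (bigD1 j) /=; last by rewrite eq_sym.
by rewrite fi fj.
Qed.

Lemma sum_bool_eq1 (I : finType) (f : I -> bool) :
  (\sum_i f i = 1)%N -> exists i0, f i0 /\ forall i, f i -> i = i0.
Proof.
move=> H; case: (pickP f) => [i0 fi0 | none].
  exists i0; split => // i fi.
  apply: (@sum_bool_le1_inj _ f); by rewrite ?H.
by move: H; rewrite big1 //; move=> i _; rewrite none.
Qed.

Lemma sum_bool_uniq (I : finType) (f : I -> bool) i0 :
  f i0 -> (forall i, f i -> i = i0) -> (\sum_i f i = 1)%N.
Proof.
move=> fi0 H; rewrite (bigD1 i0) //= big1 ?fi0 //; move=> i ne.
case fi: (f i) => //.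
by move: ne; rewrite (H _ fi) eqxx.
Qed.

Section P.
Variable C : numClosedFieldType.

Lemma sum_pickr (I : finType) (f : I -> bool) (G : I -> C) i0 :
  f i0 -> (forall i, f i -> i = i0) -> \sum_i G i * (f i)%:R = G i0.
Proof.
move=> fi0 H; rewrite (bigD1 i0) //= big1 ?fi0 ?mulr1 ?addr0 //; move=> i ne.
case fi: (f i); last by rewrite mulr0.
by move: ne; rewrite (H _ fi) eqxx.
Qed.

Lemma sum_pickl (I : finType) (f : I -> bool) (G : I -> C) i0 :
  f i0 -> (forall i, f i -> i = i0) -> \sum_i (f i)%:R * G i = G i0.
Proof.
move=> fi0 H; rewrite -(@sum_pickr I f G i0 fi0 H); apply eq_bigr => i _; exact: mulrC.
Qed.

Lemma sum_pickv (I : finType) (f : I -> bool) n (G : I -> 'cV[C]_n) i0 :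
  f i0 -> (forall i, f i -> i = i0) -> \sum_i (f i)%:R *: G i = G i0.
Proof.
move=> fi0 H; rewrite (bigD1 i0) //= big1 ?fi0 ?scale1r ?addr0 //; move=> i ne.
case fi: (f i); last by rewrite scale0r.
by move: ne; rewrite (H _ fi) eqxx.
Qed.

Lemma max_seq (T : eqType) (P : T -> Prop) (f : T -> C) (s : seq T) :
  (forall x, 0 <= f x) -> (exists x, x \in s /\ P x) ->
  exists x, P x /\ forall y, y \in s -> P y -> f y <= f x.
Proof.
move=> hf; elim: s => [|a s IH] /=; first by case=> x []; rewrite in_nil.
move=> hex.
case: (classic (exists x, x \in s /\ P x)) => [/IH [m [Pm Hm]] | hno].
  case: (classic (P a)) => Pa.
    have: (f a <= f m) || (f m <= f a) by apply: real_leVge; apply: ger0_real.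
    case/orP => h.
      exists m; split => // y; rewrite in_cons => /orP [/eqP -> _ | ys Py] //.
      by apply: Hm.
    exists a; split => // y; rewrite in_cons => /orP [/eqP -> _ | ys Py] //.
    exact: (le_trans (Hm y ys Py) h).
  exists m; split => // y; rewrite in_cons => /orP [/eqP -> Py | ys Py] //.
  by apply: Hm.
case: hex => x [xin Px].
have xa : x = a.
  move: xin; rewrite in_cons => /orP [/eqP // | xs].
  by exfalso; apply: hno; exists x.
subst x; exists a; split => // y; rewrite in_cons => /orP [/eqP -> // | ys Py].
by exfalso; apply: hno; exists y.
Qed.

Lemma termE L K tau alpha beta (mu : 'I_L -> 'I_K -> 'cV[C]_tau) phi s l k (q : C) :
  2 * sqrtC q * alpha l k * beta l l k * 'Re (dotH (mu l k) (phi s))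
   - q * dotH (phi s) (Amat alpha beta mu l k *m phi s)
  = gfun (cco alpha beta mu phi s l k) (bco alpha beta mu phi s l k) q.
Proof. rewrite /gfun /cco /bco. ring. Qed.
End P.

Theorem mainTheorem7 (C : numClosedFieldType) (L K tau : nat)
  (hK : (K <= tau)%N)
  (sigma2 Pmax : C) (hsigma : 0 < sigma2) (hPmax : 0 < Pmax)
  (beta : 'I_L -> 'I_L -> 'I_K -> C) (hbeta : forall l i j, 0 < beta l i j)
  (alpha : 'I_L -> 'I_K -> C) (halpha : forall l k, 0 < alpha l k)
  (phi : 'I_tau -> 'cV[C]_tau)
  (hphi : forall s t, dotH (phi s) (phi t) = if s == t then tau%:R else 0)
  (mu : 'I_L -> 'I_K -> 'cV[C]_tau)
  (pstar : 'I_tau -> 'I_L -> 'I_K -> C)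
  (hpstar_range : forall s l k, 0 <= pstar s l k <= Pmax)
  (hpstar_max : forall s l k q, 0 <= q <= Pmax ->
      gfun (cco alpha beta mu phi s l k) (bco alpha beta mu phi s l k) q
      <= gfun (cco alpha beta mu phi s l k) (bco alpha beta mu phi s l k)
              (pstar s l k)) :
  let piv := fun s l k =>
      gfun (cco alpha beta mu phi s l k) (bco alpha beta mu phi s l k)
           (pstar s l k) in
  let noise := sigma2 * \sum_(l < L) \sum_(k < K) alpha l k * dotH (mu l k) (mu l k) in
  (forall (p : 'I_L -> 'I_K -> C) (psi : 'I_L -> 'I_K -> 'cV[C]_tau),
      fobj sigma2 alpha beta p psi mu =
      \sum_(l < L) \sum_(k < K)
         (2 * sqrtC (p l k) * alpha l k * beta l l k * 'Re (dotH (mu l k) (psi l k))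
          - p l k * dotH (psi l k) (Amat alpha beta mu l k *m psi l k))
      - noise) /\
  (exists x : 'I_tau -> 'I_L -> 'I_K -> bool, assign_feasible x /\
     forall y, assign_feasible y -> assign_obj piv y <= assign_obj piv x) /\
  (forall x, assign_feasible x ->
     (forall y, assign_feasible y -> assign_obj piv y <= assign_obj piv x) ->
     let p0 := fun l k => \sum_(s < tau) (x s l k)%:R * pstar s l k in
     let psi0 := fun l k => \sum_(s < tau) (x s l k)%:R *: phi s in
     feasible Pmax phi p0 psi0 /\
     fobj sigma2 alpha beta p0 psi0 mu = assign_obj piv x - noise /\
     (forall p psi, feasible Pmax phi p psi ->
        fobj sigma2 alpha beta p psi mu <= assign_obj piv x - noise)).
Proof.
move=> piv noise.
have phi_inj : forall s t, phi s = phi t -> s = t.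
  move=> s t E; apply/eqP; apply: contraT => /negbTE Hne.
  have := hphi s t; rewrite Hne -E hphi eqxx => /eqP; rewrite pnatr_eq0 => /eqP t0.
  have : (0 < tau)%N := leq_ltn_trans (leq0n s) (ltn_ord s).
  by rewrite t0.
have piv0 : forall s l k, 0 <= piv s l k.
  move=> s l k; have h : (0 <= (0:C) <= Pmax) by rewrite lexx ltW.
  by move: (hpstar_max s l k 0 h); rewrite {1}/gfun sqrtC0 mulr0 !mul0r subr0.
have obj0 : forall y, 0 <= assign_obj piv y.
  move=> y; apply: sumr_ge0 => l _; apply: sumr_ge0 => k _; apply: sumr_ge0 => s _.
  by apply: mulr_ge0 => //; apply: ler0n.
split; first by move=> p psi; rewrite fobjE.
split.
  pose T := {ffun 'I_tau * 'I_L * 'I_K -> bool}.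
  pose tof (F : T) := fun s l k => F (s, l, k).
  have tofK : forall y, tof [ffun t => y t.1.1 t.1.2 t.2] = y.
    move=> y; apply: functional_extensionality => s.
    apply: functional_extensionality => l; apply: functional_extensionality => k.
    by rewrite /tof ffunE.
  have hex0 : exists F : T, F \in enum T /\ assign_feasible (tof F).
    pose y0 := fun (s : 'I_tau) (l : 'I_L) (k : 'I_K) => (val s == val k).
    exists [ffun t => y0 t.1.1 t.1.2 t.2]; rewrite mem_enum tofK; split => //.
    split.
      move=> l k; apply: (@sum_bool_uniq _ (fun s => y0 s l k) (widen_ord hK k)).
        by rewrite /y0 /=.
      by move=> s /eqP h; apply: val_inj; rewrite /= h.
    move=> l s; apply: (@sum_bool_le1 _ (fun k => y0 s l k)) => k k' /eqP h1 /eqP h2.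
    by apply: val_inj; rewrite -h1 -h2.
  have [F [PF HF]] := @max_seq C T (fun F => assign_feasible (tof F))
     (fun F => assign_obj piv (tof F)) (enum T) (fun F => obj0 _) hex0.
  exists (tof F); split => // y Hy.
  rewrite -(tofK y); apply: HF; first by rewrite mem_enum.
  by rewrite tofK.
move=> x [hrow hcol] xopt p0 psi0.
have sel : forall l k, exists s0, x s0 l k /\ forall s, x s l k -> s = s0.
  by move=> l k; apply: (@sum_bool_eq1 _ (fun s => x s l k)); apply: hrow.
have hp0 : forall l k s0, x s0 l k -> p0 l k = pstar s0 l k.
  move=> l k s0 xs0; have [s1 [xs1 U]] := sel l k.
  have e := U _ xs0; subst s0.
  exact: (@sum_pickl C _ (fun s => x s l k) (fun s => pstar s l k) s1 xs1 U).
have hpsi0 : forall l k s0, x s0 l k -> psi0 l k = phi s0.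
  move=> l k s0 xs0; have [s1 [xs1 U]] := sel l k.
  have e := U _ xs0; subst s0.
  exact: (@sum_pickv C _ (fun s => x s l k) _ phi s1 xs1 U).
split.
  split.
    by move=> l k; have [s0 [xs0 _]] := sel l k; rewrite (hp0 _ _ _ xs0).
  split.
    by move=> l k; have [s0 [xs0 _]] := sel l k; exists s0; rewrite (hpsi0 _ _ _ xs0).
  move=> l k k' ne; have [s0 [xs0 _]] := sel l k; have [s1 [xs1 _]] := sel l k'.
  rewrite (hpsi0 _ _ _ xs0) (hpsi0 _ _ _ xs1) => /phi_inj e; subst s1.
  move: ne; rewrite (@sum_bool_le1_inj _ (fun k => x s0 l k) k k' (hcol l s0) xs0 xs1).
  by rewrite eqxx.
split.
  rewrite fobjE; congr (_ - _); apply eq_bigr => l _; apply eq_bigr => k _.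
  have [s0 [xs0 U]] := sel l k.
  rewrite (hp0 _ _ _ xs0) (hpsi0 _ _ _ xs0) termE.
  by rewrite (@sum_pickr C _ (fun s => x s l k) (fun s => piv s l k) s0 xs0 U).
move=> p psi [hpr [hex hdist]].
pose y := fun (s : 'I_tau) l k => psi l k == phi s.
have hy : assign_feasible y.
  split.
    move=> l k; have [s0 e] := hex l k.
    apply: (@sum_bool_uniq _ (fun s => y s l k) s0); first by rewrite /y e.
    by move=> s /eqP; rewrite e => /phi_inj.
  move=> l s; apply: (@sum_bool_le1 _ (fun k => y s l k)) => k k' /eqP h1 /eqP h2.
  case: (eqVneq k k') => // ne; exfalso; apply: (hdist l k k' ne).
  by rewrite h1 h2.
apply: (le_trans _ (lerD (xopt y hy) (lexx (- noise)))).
rewrite fobjE lerD2r.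
apply: ler_sum => l _; apply: ler_sum => k _.
have [s0 e] := hex l k.
have ys0 : y s0 l k by rewrite /y e.
have U : forall s, y s l k -> s = s0 by move=> s /eqP; rewrite e => /phi_inj.
rewrite (@sum_pickr C _ (fun s => y s l k) (fun s => piv s l k) s0 ys0 U).
rewrite e termE; exact: hpstar_max.
Qed.
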